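(* Let $N\ge 2$ and let $p,p'$ be two paths of length $N$. Then $p$ and $p'$ produce identical shapes if and only if their edge matrices are identical.
   Context: A path of length $N$ is a vector $p=(p_0,\dots,p_{N-1})$ whose entries are the integers $0,\dots,N-1$ in some order; indices are cyclic, $p_N=p_0$, $s_{-1}=s_{N-1}$. Nodes $0,\dots,N-1$ are placed at equally spaced points clockwise around a circle; the shape of $p$ is the set of chords (unordered node pairs) $\{p_n,p_{n+1}\}$, $n=0,\dots,N-1$. The path differences are $d_n=p_{n+1}-p_n$, and the steps are $s_n=d_n$ if $|d_n|<N/2$; $s_n=N/2$ if $|d_n|=N/2$; $s_n=d_n-N$ if $d_n>N/2$; $s_n=d_n+N$ if $d_n<-N/2$. The edge matrix $E=(e_{in})\in\mathbb{Z}^{2\times N}$ of $p$ is defined column by column: for node $n\in\{0,\dots,N-1\}$ let $k$ be the index with $p_k=n$; take the two integers $s_k$ and $-s_{k-1}$, replace each of them by $0$ if its absolute value equals $N/2$, and let $e_{1n}\le e_{2n}$ be these two integers sorted in nondecreasing order. *)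

(* Defs.v *)
From HB Require Import structures.
From mathcomp Require Import all_boot all_order all_algebra all_fingroup.
Set Implicit Arguments. Unset Strict Implicit. Unset Printing Implicit Defensive.
Import Order.TTheory GRing.Theory Num.Theory.
Local Open Scope ring_scope.

(* A path of length N is a permutation p of {0,..,N-1}: p_n = p n.
   Cyclic indices: p_{n+1} = p (ordS n), s_{n-1} = s (ord_pred n). *)

Definition path_shape (N : nat) (p : {perm 'I_N}) : {set {set 'I_N}} :=
  [set [set p k; p (ordS k)] | k : 'I_N].

Definition pdiff (N : nat) (p : {perm 'I_N}) (k : 'I_N) : int :=
  (nat_of_ord (p (ordS k)))%:Z - (nat_of_ord (p k))%:Z.

Definition step_of (N : nat) (d : int) : int :=
  if (2 * `|d| < N%:Z) then d
  else if (2 * `|d| == N%:Z) then (N./2)%:Z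
  else if (2 * d > N%:Z) then d - N%:Z
  else d + N%:Z.

Definition step (N : nat) (p : {perm 'I_N}) (k : 'I_N) : int :=
  step_of N (pdiff p k).

Definition zero_half (N : nat) (x : int) : int :=
  if 2 * `|x| == N%:Z then 0 else x.

Definition edge_matrix (N : nat) (p : {perm 'I_N}) : 'M[int]_(2, N) :=
  \matrix_(i < 2, n < N)
    let k := (p^-1)%g n in
    let a := zero_half N (step p k) in
    let b := zero_half N (- step p (ord_pred k)) in
    if i == 0 then Num.min a b else Num.max a b.

(* Main.v *)
Require Import Defs.
From HB Require Import structures.
From mathcomp Require Import all_boot all_order all_algebra all_fingroup.
From mathcomp Require Import zify.
Import Order.TTheory GRing.Theory Num.Theory.

Local Open Scope ring_scope.

Lemma neg_step N (d : int) :
  zero_half N (- step_of N d) = zero_half N (step_of N (-d)).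
Proof.
rewrite /zero_half /step_of -divn2 normrN.
repeat case: ifP; move=> *; lia.
Qed.

Definition off {N} (n m : 'I_N) : int := zero_half N (step_of N (m%:Z - n%:Z)).

Lemma off_inj N (n m1 m2 : 'I_N) : m1 != n -> m2 != n -> off n m1 = off n m2 -> m1 = m2.
Proof.
move=> h1 h2.
have h1' : (nat_of_ord m1 != nat_of_ord n) := h1.
have h2' : (nat_of_ord m2 != nat_of_ord n) := h2.
have b1 := ltn_ord m1; have b2 := ltn_ord m2; have b3 := ltn_ord n.
rewrite /off /zero_half /step_of -divn2 => E; apply: val_inj => /=.
move: E; repeat case: ifP; move=> *; lia.
Qed.

Definition nb {N} (p : {perm 'I_N}) (n : 'I_N) : {set 'I_N} :=
  [set p (ordS ((p^-1)%g n)); p (ord_pred ((p^-1)%g n))].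

Lemma emE N (p : {perm 'I_N}) i n : edge_matrix p i n =
  (if i == 0 then Num.min else Num.max)
    (off n (p (ordS ((p^-1)%g n)))) (off n (p (ord_pred ((p^-1)%g n)))).
Proof.
rewrite /edge_matrix mxE /= /step /pdiff /off neg_step ord_predK permKV.
by rewrite opprB; case: (i == 0).
Qed.

Lemma ordS_neq N (k : 'I_N) : (1 < N)%N -> ordS k != k.
Proof.
move=> hN; apply/eqP => /(congr1 val) /=.
have := ltn_ord k; case: (ltngtP k.+1 N) => h.
- by rewrite modn_small // => _; lia.
- lia.
- by rewrite h modnn; lia.
Qed.

Lemma nbr N (hN : (1 < N)%N) (p : {perm 'I_N}) n m :
  (m != n) && ([set n; m] \in path_shape p) = (m \in nb p n).
Proof.
apply/idP/idP.
- case/andP => mn /imsetP [k _ E].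
  have hn : n \in [set p k; p (ordS k)] by rewrite -E !inE eqxx.
  have hm : m \in [set p k; p (ordS k)] by rewrite -E !inE eqxx orbT.
  move: hn hm; rewrite !inE => /orP [] /eqP hn /orP [] /eqP hm.
  + by move: mn; rewrite hn hm eqxx.
  + by rewrite hn permK hm eqxx.
  + by rewrite hn permK ordSK hm eqxx orbT.
  + by move: mn; rewrite hn hm eqxx.
- rewrite /nb; have := permKV p n; move: ((p^-1)%g n) => k0 hn; subst n.
  rewrite !inE => /orP [] /eqP ->; apply/andP; split.
  + by rewrite (inj_eq perm_inj) ordS_neq.
  + by apply/imsetP; exists k0.
  + rewrite (inj_eq perm_inj); apply/negP => /eqP h.
    by move: (@ordS_neq _ (ord_pred k0) hN); rewrite ord_predK h eqxx.
  + apply/imsetP; exists (ord_pred k0) => //; rewrite ord_predK.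
    by rewrite setUC.
Qed.

Lemma nb_neq N (hN : (1 < N)%N) (p : {perm 'I_N}) n m : m \in nb p n -> m != n.
Proof. by rewrite -nbr // => /andP []. Qed.

Lemma shape_nb N (hN : (1 < N)%N) (p p' : {perm 'I_N}) :
  path_shape p = path_shape p' <-> forall n, nb p n = nb p' n.
Proof.
split.
- by move=> E n; apply/setP => m; rewrite -!nbr // E.
- move=> H.
  suff sub : forall q q' : {perm 'I_N}, (forall n, nb q n = nb q' n) ->
     path_shape q \subset path_shape q'.
    by apply/eqP; rewrite eqEsubset !sub // => n; rewrite H.
  move=> q q' Hq; apply/subsetP => X /imsetP [k _ ->].
  have : q (ordS k) \in nb q (q k) by rewrite /nb permK !inE eqxx.
  by rewrite Hq -nbr // => /andP [].
Qed.

Lemma set2_cases (T : finType) (a b a' b' : T) :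
  [set a; b] = [set a'; b'] -> (a = a' /\ b = b') \/ (a = b' /\ b = a').
Proof.
move=> E.
have ha : a \in [set a'; b'] by rewrite -E !inE eqxx.
have hb : b \in [set a'; b'] by rewrite -E !inE eqxx orbT.
have ha' : a' \in [set a; b] by rewrite E !inE eqxx.
have hb' : b' \in [set a; b] by rewrite E !inE eqxx orbT.
move: ha hb ha' hb'; rewrite !inE.
move=> /orP [] /eqP ? /orP [] /eqP ? /orP [] /eqP ? /orP [] /eqP ?; subst; auto.
Qed.

Lemma minmax (x y x' y' : int) :
  Num.min x y = Num.min x' y' -> Num.max x y = Num.max x' y' ->
  (x = x' /\ y = y') \/ (x = y' /\ y = x').
Proof.
case: (leP x y); case: (leP x' y') => h1 h2 e1 e2; subst; lia.
Qed.

Lemma em_nb N (hN : (1 < N)%N) (p p' : {perm 'I_N}) :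
  edge_matrix p = edge_matrix p' <-> forall n, nb p n = nb p' n.
Proof.
split.
- move=> E n.
  have e1 := congr1 (fun M : 'M[int]_(2, N) => M 0 n) E.
  have e2 := congr1 (fun M : 'M[int]_(2, N) => M 1 n) E.
  move: e1 e2 => /=; rewrite !emE /=.
  have a1 : p (ordS ((p^-1)%g n)) \in nb p n by rewrite !inE eqxx.
  have a2 : p (ord_pred ((p^-1)%g n)) \in nb p n by rewrite !inE eqxx orbT.
  have a3 : p' (ordS ((p'^-1)%g n)) \in nb p' n by rewrite !inE eqxx.
  have a4 : p' (ord_pred ((p'^-1)%g n)) \in nb p' n by rewrite !inE eqxx orbT.
  move/nb_neq: a1 => /(_ hN) a1; move/nb_neq: a2 => /(_ hN) a2.
  move/nb_neq: a3 => /(_ hN) a3; move/nb_neq: a4 => /(_ hN) a4.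
  move=> e1 e2; case: (minmax _ _ _ _ e1 e2) => [[f1 f2] | [f1 f2]].
  + by rewrite /nb (off_inj _ _ _ _ a1 a3 f1) (off_inj _ _ _ _ a2 a4 f2).
  + by rewrite /nb (off_inj _ _ _ _ a1 a4 f1) (off_inj _ _ _ _ a2 a3 f2) setUC.
- move=> H; apply/matrixP => i n; rewrite !emE.
  case: (set2_cases _ _ _ _ _ (H n)) => [[-> ->] | [-> ->]]; first by [].
  case: (i == 0) => /=; [exact: minC | exact: maxC].
Qed.

Theorem mainTheorem4 (N : nat) (hN : (2 <= N)%N) (p p' : {perm 'I_N}) :
  path_shape p = path_shape p' <-> edge_matrix p = edge_matrix p'.
Proof.
rewrite shape_nb // em_nb //.
Qed.
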